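(* Consider the following two-period model. States $\omega_1,\omega_2\in\{0,1\}$ satisfy $\Pr[\omega_1=1]=\mu_0\in(0,1)$ and $\Pr[\omega_2=\omega\mid\omega_1=\omega]=\rho$ with $\rho\in(1/2,1)$. In each period $t$ a test may be taken at cost $k>0$ to the principal; a test reveals $\omega_t$, and if no test is taken $\omega_t$ is nevertheless revealed (for free) with probability $\pi\in(0,1)$; unrevealed states are recorded as the report $r_t=\varnothing$, and revealed states are recorded truthfully, $r_t=\omega_t$. A (baseline) mechanism consists of $\sigma_1\in\{0,1\}$ (whether to test in period 1), $\sigma_2:\{\varnothing,0,1\}\to\{0,1\}$ (whether to test in period 2 as a function of $r_1$) and $\hat x:\{\varnothing,0,1\}^2\to\{0,1\}$; testing occurs exactly when recommended. The principal solves $$\max_{(\sigma,\hat x)}\ \Pr_\sigma[\hat x(r_1,r_2)=\omega_2]-k\big(\sigma_1+\mathbb{E}_{\sigma_1}[\sigma_2(r_1)]\big),$$ where $\mathbb{E}_{\sigma_1}[\sigma_2(r_1)]=[\sigma_1+(1-\sigma_1)\pi][\mu_0\sigma_2(1)+(1-\mu_0)\sigma_2(0)]+(1-\sigma_1)(1-\pi)\sigma_2(\varnothing)$. Let $\kappa=k/(1-\pi)$ and $\mu_2(\varnothing)=\rho\mu_0+(1-\rho)(1-\mu_0)$. Then an optimal solution pairs the efficient assignment policy $\hat x^*(h_2)=\mathbb{1}[\mu_2(h_2)\ge 1/2]$ (where $\mu_2(h_2)$ is the posterior probability that $\omega_2=1$ given the reports $h_2=(r_1,r_2)$, required on all histories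 occurring with positive probability) with the testing policy $\sigma_1^*=0$ and: (i) if $\kappa\in(0,1-\rho]$: $\sigma_2^*(r_1)=1$ for all $r_1$; (ii) if $\kappa\in(1-\rho,\min\{\mu_2(\varnothing),1-\mu_2(\varnothing)\}]$: $\sigma_2^*(r_1)=\mathbb{1}[r_1=\varnothing]$; (iii) if $\kappa>\min\{\mu_2(\varnothing),1-\mu_2(\varnothing)\}$: $\sigma_2^*(r_1)=0$ for all $r_1$. Moreover, if $\kappa=0$, then always testing is optimal.
   Context: This is the ''baseline'' problem in which the principal directly controls testing and observes all revealed test results (the agent's incentives are ignored). $\mathbb{1}[\cdot]$ is the indicator function. *)

(* Defs.v *)
From HB Require Import structures.
From mathcomp Require Import all_boot all_order all_algebra.
Set Implicit Arguments. Unset Strict Implicit. Unset Printing Implicit Defensive.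
Import Order.TTheory GRing.Theory Num.Theory.
Local Open Scope ring_scope.

(* States are bool (false = 0, true = 1).  Reports are option bool:
   None = the empty report (unrevealed), Some w = revealed state w. *)

Section Model.
Variable R : realFieldType.
Variables (mu0 rho pi k : R).

Definition prior (w : bool) : R := if w then mu0 else 1 - mu0.
Definition trans (w1 w2 : bool) : R := if w1 == w2 then rho else 1 - rho.
Definition rep_prob (test : bool) (w : bool) (r : option bool) : R :=
  match r with
  | None => if test then 0 else 1 - pi
  | Some w' => if w' == w then (if test then 1 else pi) else 0
  end.

Definition joint (s1 : bool) (s2 : option bool -> bool)
  (w1 w2 : bool) (r1 r2 : option bool) : R :=
  prior w1 * trans w1 w2 * rep_prob s1 w1 r1 * rep_prob (s2 r1) w2 r2.

Definition hist_prob s1 s2 (r1 r2 : option bool) : R :=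
  \sum_(w1 : bool) \sum_(w2 : bool) joint s1 s2 w1 w2 r1 r2.

Definition mu2 s1 s2 (r1 r2 : option bool) : R :=
  (\sum_(w1 : bool) joint s1 s2 w1 true r1 r2) / hist_prob s1 s2 r1 r2.

Definition efficient s1 s2 (x : option bool -> option bool -> bool) : Prop :=
  forall r1 r2, 0 < hist_prob s1 s2 r1 r2 ->
    x r1 r2 = (1 / 2 <= mu2 s1 s2 r1 r2).

Definition accuracy s1 s2 (x : option bool -> option bool -> bool) : R :=
  \sum_(w1 : bool) \sum_(w2 : bool) \sum_(r1 : option bool) \sum_(r2 : option bool)
    joint s1 s2 w1 w2 r1 r2 * (x r1 r2 == w2)%:R.

Definition exp_test2 (s1 : bool) (s2 : option bool -> bool) : R :=
  (s1%:R + (1 - s1%:R) * pi) *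
    (mu0 * (s2 (Some true))%:R + (1 - mu0) * (s2 (Some false))%:R)
  + (1 - s1%:R) * (1 - pi) * (s2 None)%:R.

Definition value s1 s2 x : R :=
  accuracy s1 s2 x - k * (s1%:R + exp_test2 s1 s2).

Definition optimal s1 s2 x : Prop :=
  forall (s1' : bool) (s2' : option bool -> bool)
         (x' : option bool -> option bool -> bool),
    value s1' s2' x' <= value s1 s2 x.

End Model.

(* Main.v *)
Require Import Defs.
From HB Require Import structures.
From mathcomp Require Import all_boot all_order all_algebra.
From mathcomp Require Import ring lra.
Import Order.TTheory GRing.Theory Num.Theory.
Set Implicit Arguments. Unset Strict Implicit.
Local Open Scope ring_scope.

Lemma sum_opt (R : nmodType) (F : option bool -> R) :
  \sum_(r : option bool) F r = F None + (F (Some true) + F (Some false)).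
Proof.
rewrite (bigD1 None) //= (bigD1 (Some true)) //= (bigD1 (Some false)) //= big_pred0 ?addr0 //.
by case=> [[]|].
Qed.

Definition PP (R : realFieldType) (mu0 rho pi : R) s1 s2 r1 r2 (b : bool) : R :=
  \sum_(w1 : bool) joint mu0 rho pi s1 s2 w1 b r1 r2.

Lemma acc_eq (R : realFieldType) (mu0 rho pi : R) s1 s2 x :
  accuracy mu0 rho pi s1 s2 x =
  \sum_(r1 : option bool) \sum_(r2 : option bool) PP mu0 rho pi s1 s2 r1 r2 (x r1 r2).
Proof.
transitivity (\sum_(r1 : option bool) \sum_(r2 : option bool) \sum_(w2 : bool)
   \sum_(w1 : bool) joint mu0 rho pi s1 s2 w1 w2 r1 r2 * (x r1 r2 == w2)%:R).
  rewrite /accuracy !big_bool !sum_opt !big_bool /=; ring.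
apply: eq_bigr => r1 _; apply: eq_bigr => r2 _.
rewrite /PP !big_bool /=; case: (x r1 r2) => /=; ring.
Qed.

Lemma hist_eq (R : realFieldType) (mu0 rho pi : R) s1 s2 r1 r2 :
  hist_prob mu0 rho pi s1 s2 r1 r2 = PP mu0 rho pi s1 s2 r1 r2 true + PP mu0 rho pi s1 s2 r1 r2 false.
Proof. rewrite /hist_prob /PP !big_bool /=; ring. Qed.

Lemma joint_ge0 (R : realFieldType) (mu0 rho pi : R) s1 s2 w1 w2 r1 r2 :
  0 <= mu0 <= 1 -> 0 <= rho <= 1 -> 0 <= pi <= 1 ->
  0 <= joint mu0 rho pi s1 s2 w1 w2 r1 r2.
Proof.
move=> /andP[m0 m1] /andP[r0 r1'] /andP[p0 p1].
rewrite /joint; apply: mulr_ge0; [apply: mulr_ge0; [apply: mulr_ge0|]|].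
- by case: w1 => /=; lra.
- by rewrite /trans; case: (w1 == w2); lra.
- by rewrite /rep_prob; case: r1 => [w|]; [case: (w == w1)|]; case: s1; lra.
- by rewrite /rep_prob; case: r2 => [w|]; [case: (w == w2)|]; case: (s2 r1); lra.
Qed.

Lemma PP_ge0 (R : realFieldType) (mu0 rho pi : R) s1 s2 r1 r2 b :
  0 <= mu0 <= 1 -> 0 <= rho <= 1 -> 0 <= pi <= 1 ->
  0 <= PP mu0 rho pi s1 s2 r1 r2 b.
Proof. by move=> *; rewrite /PP big_bool addr_ge0 //; apply: joint_ge0. Qed.

Lemma acc_le (R : realFieldType) (mu0 rho pi : R) s1 s2 x :
  accuracy mu0 rho pi s1 s2 x <=
  \sum_(r1 : option bool) \sum_(r2 : option bool)
     Num.max (PP mu0 rho pi s1 s2 r1 r2 true) (PP mu0 rho pi s1 s2 r1 r2 false).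
Proof.
rewrite acc_eq; apply: ler_sum => r1 _; apply: ler_sum => r2 _.
by case: (x r1 r2); rewrite le_max lexx ?orbT.
Qed.

Lemma acc_eff (R : realFieldType) (mu0 rho pi : R) s1 s2 x :
  0 <= mu0 <= 1 -> 0 <= rho <= 1 -> 0 <= pi <= 1 ->
  efficient mu0 rho pi s1 s2 x ->
  accuracy mu0 rho pi s1 s2 x =
  \sum_(r1 : option bool) \sum_(r2 : option bool)
     Num.max (PP mu0 rho pi s1 s2 r1 r2 true) (PP mu0 rho pi s1 s2 r1 r2 false).
Proof.
move=> hm hr hp eff.
rewrite acc_eq; apply: eq_bigr => r1 _; apply: eq_bigr => r2 _.
have h1 := PP_ge0 s1 s2 r1 r2 true hm hr hp.
have h0 := PP_ge0 s1 s2 r1 r2 false hm hr hp.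
set a := PP _ _ _ _ _ _ _ true in h1 *.
set b := PP _ _ _ _ _ _ _ false in h0 *.
have [hz|hpos] := eqVneq (a + b) 0.
  have a0 : a = 0 by lra.
  have b0 : b = 0 by lra.
  by rewrite /a /b; case: (x r1 r2); rewrite -/a -/b a0 b0 maxxx.
have hpos' : 0 < a + b by rewrite lt_def hpos addr_ge0.
have := eff r1 r2; rewrite hist_eq -/a -/b => /(_ hpos') ->.
rewrite /mu2 hist_eq -/a -/b.
have -> : (\sum_(w1:bool) joint mu0 rho pi s1 s2 w1 true r1 r2) = a by [].
have -> : (1 / 2 <= a / (a + b)) = (b <= a).
  rewrite ler_pdivlMr //; apply/idP/idP => H; lra.
by case: leP.
Qed.

Definition Mm (R : realFieldType) (mu0 rho : R) : R :=
  Num.max (rho * mu0 + (1 - rho) * (1 - mu0)) (1 - (rho * mu0 + (1 - rho) * (1 - mu0))).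

Definition W (R : realFieldType) (mu0 rho pi : R) (s1 t : bool) (r1 : option bool) : R :=
  match r1 with
  | Some w => prior mu0 w * (if s1 then 1 else pi) * (if t then 1 else pi + (1 - pi) * rho)
  | None => if s1 then 0 else (1 - pi) * (if t then 1 else pi + (1 - pi) * Mm mu0 rho)
  end.

Lemma maxpM (R : realFieldType) (c a b : R) : 0 <= c ->
  Num.max (c * a) (c * b) = c * Num.max a b.
Proof.
move=> c0; case: (leP a b) => H.
  by rewrite max_r // ler_wpM2l.
by rewrite max_l // ler_wpM2l // ltW.
Qed.

Lemma maxW (R : realFieldType) (mu0 rho pi : R) s1 s2 r1 :
  0 <= mu0 <= 1 -> 1/2 <= rho <= 1 -> 0 <= pi <= 1 ->
  \sum_(r2 : option bool) Num.max (PP mu0 rho pi s1 s2 r1 r2 true) (PP mu0 rho pi s1 s2 r1 r2 false)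
  = W mu0 rho pi s1 (s2 r1) r1.
Proof.
move=> /andP[m0 m1] /andP[r0 r1'] /andP[p0 p1].
have q0 : 0 <= 1 - pi by lra.
have m0' : 0 <= 1 - mu0 by lra.
have rr : 0 <= 2 * rho - 1 by lra.
have H1 := mulr_ge0 (mulr_ge0 m0 q0) rr.
have H2 := mulr_ge0 (mulr_ge0 (mulr_ge0 m0 q0) rr) p0.
have H3 := mulr_ge0 (mulr_ge0 m0' q0) rr.
have H4 := mulr_ge0 (mulr_ge0 (mulr_ge0 m0' q0) rr) p0.
have rp : 0 <= rho by lra.
have rq : 0 <= 1 - rho by lra.
rewrite sum_opt /PP !big_bool /= /joint /prior /trans /rep_prob /W /=.
case: r1 => [w|]; [case: w|]; case: s1; case: (s2 _); rewrite /= ?mulr0 ?mul0r ?addr0 ?add0r ?mulr1 ?maxxx.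
all: rewrite ?[Num.max _ 0]max_l ?[Num.max 0 _]max_r.
all: try solve [repeat first [assumption | apply: mulr_ge0 | apply: addr_ge0]].
all: try lra.
- rewrite max_l; lra.
- rewrite max_l; lra.
- rewrite max_r; lra.
- rewrite max_r; lra.
have -> : mu0*rho*(1-pi)*(1-pi) + (1-mu0)*(1-rho)*(1-pi)*(1-pi) = ((1-pi)*(1-pi)) * (rho*mu0 + (1-rho)*(1-mu0)) by ring.
have -> : mu0*(1-rho)*(1-pi)*(1-pi) + (1-mu0)*rho*(1-pi)*(1-pi) = ((1-pi)*(1-pi)) * (1 - (rho*mu0 + (1-rho)*(1-mu0))) by ring.
rewrite maxpM ?mulr_ge0 // /Mm; ring.
Qed.

Definition VV (R : realFieldType) (mu0 rho pi k : R) s1 s2 : R :=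
  \sum_(r1 : option bool) W mu0 rho pi s1 (s2 r1) r1 - k * (s1%:R + exp_test2 mu0 pi s1 s2).

Lemma value_le (R : realFieldType) (mu0 rho pi k : R) s1 s2 x :
  0 <= mu0 <= 1 -> 1/2 <= rho <= 1 -> 0 <= pi <= 1 ->
  value mu0 rho pi k s1 s2 x <= VV mu0 rho pi k s1 s2.
Proof.
move=> hm hr hp; rewrite /value /VV lerD2r.
apply: le_trans (acc_le _ _ _ _ _ _) _.
rewrite le_eqVlt; apply/orP; left; apply/eqP.
by apply: eq_bigr => r1 _; rewrite maxW.
Qed.

Lemma value_eff (R : realFieldType) (mu0 rho pi k : R) s1 s2 x :
  0 <= mu0 <= 1 -> 1/2 <= rho <= 1 -> 0 <= pi <= 1 ->
  efficient mu0 rho pi s1 s2 x ->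
  value mu0 rho pi k s1 s2 x = VV mu0 rho pi k s1 s2.
Proof.
move=> hm hr hp eff; rewrite /value /VV (acc_eff hm _ hp eff); last first.
  move: hr => /andP[? ?]; apply/andP; split => //; lra.
by congr (_ - _); apply: eq_bigr => r1 _; rewrite maxW.
Qed.

Definition hS (R : realFieldType) (rho pi k : R) (t : bool) : R :=
  if t then 1 - k else pi + (1 - pi) * rho.
Definition gN (R : realFieldType) (mu0 rho pi k : R) (t : bool) : R :=
  if t then 1 - k else pi + (1 - pi) * Mm mu0 rho.

Lemma Vform (R : realFieldType) (mu0 rho pi k : R) s1 s2 :
  VV mu0 rho pi k s1 s2 =
  if s1 then mu0 * hS rho pi k (s2 (Some true)) + (1 - mu0) * hS rho pi k (s2 (Some false)) - k
  else pi * (mu0 * hS rho pi k (s2 (Some true)) + (1 - mu0) * hS rho pi k (s2 (Some false)))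
       + (1 - pi) * gN mu0 rho pi k (s2 None).
Proof.
rewrite /VV sum_opt /W /exp_test2 /prior /hS /gN.
by case: s1; case: (s2 None); case: (s2 (Some true)); case: (s2 (Some false)); rewrite /=; ring.
Qed.

Lemma Vopt (R : realFieldType) (mu0 rho pi k : R) tS tN s1 s2 :
  0 <= mu0 <= 1 -> 0 <= pi <= 1 -> 0 <= k ->
  (forall b, hS rho pi k b <= hS rho pi k tS) ->
  (forall b, gN mu0 rho pi k b <= gN mu0 rho pi k tN) ->
  hS rho pi k tS <= 1 ->
  VV mu0 rho pi k s1 s2 <= pi * hS rho pi k tS + (1 - pi) * gN mu0 rho pi k tN.
Proof.
move=> /andP[m0 m1] /andP[p0 p1] k0 hh hg h1.
have m0' : 0 <= 1 - mu0 by lra.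
have p0' : 0 <= 1 - pi by lra.
have ha := ler_wpM2l m0 (hh (s2 (Some true))).
have hb := ler_wpM2l m0' (hh (s2 (Some false))).
have hX : mu0 * hS rho pi k (s2 (Some true)) + (1 - mu0) * hS rho pi k (s2 (Some false))
   <= hS rho pi k tS by lra.
have hgN := ler_wpM2l p0' (hg (s2 None)).
have hgT := ler_wpM2l p0' (hg true).
rewrite Vform; case: s1.
  have e1 : 0 <= (1 - pi) * (1 - hS rho pi k tS) by apply: mulr_ge0 => //; lra.
  have e2 := mulr_ge0 p0 k0.
  move: hgT; rewrite /gN /= => hgT; lra.
have := ler_wpM2l p0 hX; lra.
Qed.

Lemma Mm_le (R : realFieldType) (mu0 rho : R) :
  0 <= mu0 <= 1 -> 1/2 <= rho <= 1 -> Mm mu0 rho <= rho.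
Proof.
move=> /andP[m0 m1] /andP[r0 r1].
have rr : 0 <= 2 * rho - 1 by lra.
have := mulr_ge0 m0 rr; have : 0 <= 1 - mu0 by lra.
move=> /mulr_ge0 /(_ rr) => ?; rewrite /Mm ge_max => ?; apply/andP; split; lra.
Qed.

Lemma min_eq (R : realFieldType) (a : R) : Num.min a (1 - a) = 1 - Num.max a (1 - a).
Proof. rewrite minr_to_max; ring. Qed.

Lemma opt_of (R : realFieldType) (mu0 rho pi k : R) s1 s2 x :
  0 <= mu0 <= 1 -> 1/2 <= rho <= 1 -> 0 <= pi <= 1 ->
  efficient mu0 rho pi s1 s2 x ->
  (forall s1' s2', VV mu0 rho pi k s1' s2' <= VV mu0 rho pi k s1 s2) ->
  optimal mu0 rho pi k s1 s2 x.
Proof.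
move=> hm hr hp eff H s1' s2' x'; rewrite (value_eff k hm hr hp eff).
exact: le_trans (value_le k s1' s2' x' hm hr hp) (H _ _).
Qed.

Theorem proposition1 (R : realFieldType) (mu0 rho pi k : R) :
  0 < mu0 < 1 -> 1 / 2 < rho < 1 -> 0 < pi < 1 -> 0 <= k ->
  let kappa := k / (1 - pi) in
  let m2 := rho * mu0 + (1 - rho) * (1 - mu0) in
  (* (i) *)
  (0 < kappa <= 1 - rho ->
     forall x, efficient mu0 rho pi false (fun _ => true) x ->
       optimal mu0 rho pi k false (fun _ => true) x) /\
  (* (ii) *)
  (1 - rho < kappa <= Num.min m2 (1 - m2) ->
     forall x, efficient mu0 rho pi false (fun r1 => r1 == None) x ->
       optimal mu0 rho pi k false (fun r1 => r1 == None) x) /\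
  (* (iii) *)
  (Num.min m2 (1 - m2) < kappa ->
     forall x, efficient mu0 rho pi false (fun _ => false) x ->
       optimal mu0 rho pi k false (fun _ => false) x) /\
  (* kappa = 0: always testing *)
  (kappa = 0 ->
     forall x, efficient mu0 rho pi true (fun _ => true) x ->
       optimal mu0 rho pi k true (fun _ => true) x).
Proof.
move=> /andP[m0 m1] /andP[r0 r1] /andP[p0 p1] k0 kappa m2.
have hm : 0 <= mu0 <= 1 by apply/andP; split; lra.
have hr : 1/2 <= rho <= 1 by apply/andP; split; lra.
have hp : 0 <= pi <= 1 by apply/andP; split; lra.
have pp : 0 < 1 - pi by lra.
have hM := Mm_le hm hr.
have hmin : Num.min m2 (1 - m2) = 1 - Mm mu0 rho by rewrite min_eq.
rewrite /kappa hmin.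
have hq : 0 <= 1 - pi by lra.
have hMrho := ler_wpM2l hq (hM).
have hqr : 0 <= (1 - pi) * (1 - rho) by apply: mulr_ge0; lra.
have eqr : forall a b : R, a = b -> a <= b by move=> a b ->.
split; [|split; [|split]].
- move=> /andP[_ hk] x eff; apply: opt_of => // s1' s2'.
  move: hk; rewrite ler_pdivrMr // => hk.
  apply: le_trans (Vopt (tS:=true) (tN:=true) s1' s2' hm hp k0 _ _ _) _.
  + by case; rewrite /hS //=; lra.
  + by case; rewrite /gN //=; lra.
  + by rewrite /hS; lra.
  + by rewrite Vform /=; apply: eqr; ring.
- move=> /andP[hk1 hk2] x eff; apply: opt_of => // s1' s2'.
  move: hk1 hk2; rewrite ler_pdivrMr // ltr_pdivlMr // => hk1 hk2.
  apply: le_trans (Vopt (tS:=false) (tN:=true) s1' s2' hm hp k0 _ _ _) _.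
  + by case; rewrite /hS //=; lra.
  + by case; rewrite /gN //=; lra.
  + by rewrite /hS; lra.
  + by rewrite Vform /=; apply: eqr; ring.
- move=> hk x eff; apply: opt_of => // s1' s2'.
  move: hk; rewrite ltr_pdivlMr // => hk.
  apply: le_trans (Vopt (tS:=false) (tN:=false) s1' s2' hm hp k0 _ _ _) _.
  + by case; rewrite /hS //=; lra.
  + by case; rewrite /gN //=; lra.
  + by rewrite /hS; lra.
  + by rewrite Vform /=; apply: eqr; ring.
- move=> hk x eff; apply: opt_of => // s1' s2'.
  have k00 : k = 0.
    move/eqP: hk; rewrite mulf_eq0 invr_eq0 => /orP[/eqP //|/eqP]; lra.
  apply: le_trans (Vopt (tS:=true) (tN:=true) s1' s2' hm hp k0 _ _ _) _.
  + by case; rewrite /hS //=; lra.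
  + by case; rewrite /gN //=; lra.
  + by rewrite /hS; lra.
  + by rewrite Vform /hS /gN /= k00; apply: eqr; ring.
Qed.
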